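(* Let $M,N$ be weights of $\mathbb{R}^m,\mathbb{R}^n$, let $A\in\mathbb{R}^{m\times n}$ with $MA=AN$, and let $K\subseteq\mathbb{R}^n$ be a closed cone. Then $$(A\circ I\circ K)^{[*]}\cap\mathcal{R}(A\circ I)\subseteq (A^{[\dagger]})^{[*]}\circ I\circ K^{[*]}.$$ If moreover $A^{[\dagger]}\circ A\circ K\subseteq K$, then equality holds.
   Context: A weight is a real symmetric matrix $W$ with $W^2=I$. $\mathbb{R}^m$ and $\mathbb{R}^n$ carry weights $M\in\mathbb{R}^{m\times m}$ and $N\in\mathbb{R}^{n\times n}$, respectively. The indefinite inner product on the space with weight $W$ is $[x,y]=\langle x,Wy\rangle$. Indefinite matrix product: if $B$ has $p$ columns and $C$ has $p$ rows (or is a vector in $\mathbb{R}^p$), $p\in\{m,n\}$, and $W$ is the weight of $\mathbb{R}^p$, then $B\circ C:=BWC$. $I$ denotes an identity matrix of the appropriate size. Indefinite adjoint of $B\in\mathbb{R}^{p\times q}$: $B^{[*]}:=W_qB^TW_p$, where $W_p,W_q$ are the weights of $\mathbb{R}^p,\mathbb{R}^q$. Indefinite Moore–Penrose inverse: $A^{[\dagger]}$ is the unique $X\in\mathbb{R}^{n\times m}$ such that - $A\circ X\circ A=A$, - $X\circ A\circ X=X$, - $(A\circ X)^{[*]}=A\circ X$, - $(X\circ A)^{[*]}=X\circ A$. It equals $NA^\dagger M$. Range and null space: for a matrix $B$ with $q$ columns, $\mathcal{R}(B)=\{B\circ x:x\in\mathbb{R}^q\}$ and $\mathcal{N}(B)=\{x\in\mathbb{R}^q:B\circ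 x=0\}$. A cone is a nonempty set closed under addition and under multiplication by nonnegative scalars. For $S$ a subset of $\mathbb{R}^p$ with weight $W$, the dual is $S^{[*]}=\{x\in\mathbb{R}^p:[x,t]\ge0\ \forall t\in S\}$. For a matrix $B$ and a set $S$, $B\circ S=\{B\circ s:s\in S\}$. *)

(* Defs.v *)
(* Real scalars: an arbitrary real (ordered) field R;
   the paper's case is R = the real numbers. *)
From HB Require Import structures.
From mathcomp Require Import all_boot all_order all_algebra.
Set Implicit Arguments. Unset Strict Implicit. Unset Printing Implicit Defensive.
Import Order.TTheory GRing.Theory Num.Theory.
Local Open Scope ring_scope.

Definition vset (R : realFieldType) (p : nat) := 'cV[R]_p -> Prop.

Definition vsubset (R : realFieldType) (p : nat) (S T : vset R p) : Prop :=
  forall x, S x -> T x.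

Definition vinter (R : realFieldType) (p : nat) (S T : vset R p) : vset R p :=
  fun x => S x /\ T x.

Definition is_weight (R : realFieldType) (p : nat) (W : 'M[R]_p) : Prop :=
  W^T = W /\ W *m W = 1%:M.

Definition iip (R : realFieldType) (p : nat) (W : 'M[R]_p) (x y : 'cV[R]_p) : R :=
  (x^T *m (W *m y)) 0 0.

Definition icirc (R : realFieldType) (a p b : nat) (W : 'M[R]_p)
  (B : 'M[R]_(a, p)) (C : 'M[R]_(p, b)) : 'M[R]_(a, b) := B *m W *m C.

Definition iadj (R : realFieldType) (p q : nat) (Wp : 'M[R]_p) (Wq : 'M[R]_q)
  (B : 'M[R]_(p, q)) : 'M[R]_(q, p) := Wq *m B^T *m Wp.

Definition iimg (R : realFieldType) (a q : nat) (W : 'M[R]_q)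
  (B : 'M[R]_(a, q)) (S : vset R q) : vset R a :=
  fun x => exists s, S s /\ x = icirc W B s.

Definition irange (R : realFieldType) (a q : nat) (W : 'M[R]_q)
  (B : 'M[R]_(a, q)) : vset R a :=
  iimg W B (fun _ => True).

Definition idual (R : realFieldType) (p : nat) (W : 'M[R]_p) (S : vset R p) : vset R p :=
  fun x => forall t, S t -> 0 <= iip W x t.

Definition is_cone (R : realFieldType) (p : nat) (K : vset R p) : Prop :=
  (exists x, K x) /\
  (forall x y, K x -> K y -> K (x + y)) /\
  (forall (c : R) x, 0 <= c -> K x -> K (c *: x)).

Definition is_closed (R : realFieldType) (p : nat) (K : vset R p) : Prop :=
  forall x : 'cV[R]_p,
    (forall e : R, 0 < e -> exists y, K y /\ \sum_(i < p) (x i 0 - y i 0) ^+ 2 < e) ->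
    K x.

Definition is_iMP (R : realFieldType) (m n : nat) (M : 'M[R]_m) (N : 'M[R]_n)
  (A : 'M[R]_(m, n)) (X : 'M[R]_(n, m)) : Prop :=
  [/\ icirc M (icirc N A X) A = A,
      icirc N (icirc M X A) X = X,
      iadj M M (icirc N A X) = icirc N A X
    & iadj N N (icirc M X A) = icirc M X A].

(* Main.v *)
Require Import Defs.
From HB Require Import structures.
From mathcomp Require Import all_boot all_order all_algebra.
Import Order.TTheory GRing.Theory Num.Theory.
Local Open Scope ring_scope.

Lemma wcancel {R : realFieldType} {a p : nat} {W : 'M[R]_p} (B : 'M[R]_(a, p)) :
  W *m W = 1%:M -> B *m W *m W = B.
Proof. by move=> h; rewrite -mulmxA h mulmx1. Qed.

Theorem lemma3p8 (R : realFieldType) (m n : nat)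
  (M : 'M[R]_m) (N : 'M[R]_n) (A : 'M[R]_(m, n)) (X : 'M[R]_(n, m))
  (K : vset R n) :
  is_weight M -> is_weight N -> M *m A = A *m N ->
  is_iMP M N A X ->
  is_cone K -> is_closed K ->
  vsubset
    (vinter (idual M (iimg N (icirc N A 1%:M) K)) (irange N (icirc N A 1%:M)))
    (iimg N (icirc N (iadj N M X) 1%:M) (idual N K))
  /\
  (vsubset (iimg N (icirc M X A) K) K ->
   vsubset
     (iimg N (icirc N (iadj N M X) 1%:M) (idual N K))
     (vinter (idual M (iimg N (icirc N A 1%:M) K)) (irange N (icirc N A 1%:M)))).
Proof.
move=> [hMt hMM] [hNt hNN] hA [h1 h2 h3 h4] _ _.
rewrite /icirc /iadj in h1 h2 h3 h4.
rewrite /vsubset /vinter /idual /iimg /irange /icirc /iadj /iip.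
have hAt : A^T *m M = N *m A^T.
  by have := congr1 trmx hA; rewrite !trmx_mul hMt hNt.
have h3' : M *m X^T *m N *m A^T = A *m N *m X *m M.
  by rewrite -h3 !trmx_mul hNt !mulmxA (wcancel _ hMM).
split.
- move=> y [Hd [x [_ Hx]]].
  rewrite /icirc in Hx.
  have Hy : y = A *m x by rewrite Hx mulmx1 (wcancel _ hNN).
  exists (N *m A^T *m M *m y); split.
  + move=> t Kt.
    have := Hd (A *m N *m 1%:M *m N *m t) (ex_intro _ t (conj Kt erefl)).
    rewrite /iip mulmx1 (wcancel _ hNN).
    congr (0 <= _ _ _).
    rewrite !trmx_mul hMt hNt trmxK !mulmxA.
    by rewrite -[y^T *m M *m A *m N *m N]mulmxA hNN mulmx1.
  + rewrite mulmx1 !mulmxA !(wcancel _ hNN).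
    rewrite -!mulmxA (mulmxA A^T M y) hAt !mulmxA h3' Hy !mulmxA.
    by rewrite h1.
- move=> HK y [u [Hu Hy]]; rewrite /icirc in Hy; rewrite mulmx1 (wcancel _ hNN) in Hy.
  split.
  + move=> t [s [Ks ->]].
    have Ks' := HK (X *m M *m A *m N *m s) (ex_intro _ s (conj Ks erefl)).
    have := Hu _ Ks'.
    rewrite /iip mulmx1 (wcancel _ hNN) Hy.
    congr (0 <= _ _ _).
    rewrite !trmx_mul hMt hNt trmxK !mulmxA.
    rewrite -[u^T *m N *m X *m M *m M]mulmxA hMM mulmx1.
    by rewrite -(mulmxA _ M A) hA mulmxA (wcancel _ hNN).
  + exists (N *m X *m X^T *m N *m u); split => //.
    rewrite /icirc mulmx1 !mulmxA !(wcancel _ hNN) Hy.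
    have eX : X^T = X^T *m N *m A^T *m M *m X^T.
      by rewrite -{1}h2 !trmx_mul hMt hNt !mulmxA.
    by rewrite {1}eX !mulmxA h3' (wcancel _ hMM).
Qed.
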